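(* Let $Q\subset\mathbb{R}^d$ be a lattice polytope with vertex set $V$, let $\Delta$ be a flag unimodular triangulation of $Q$ with vertex set $V$, and let $w:V\to\mathbb{R}$. Then the following are equivalent: (i) $\Delta$ is the regular triangulation of $Q$ induced by $w$; (ii) for every edge $\{v_1,v_2\}$ of $\Delta$ and every pair of vertices $\{v'_1,v'_2\}\subseteq V$ with $\{v'_1,v'_2\}\ne\{v_1,v_2\}$ and $v_1+v_2=v'_1+v'_2$, we have $w(v_1)+w(v_2)<w(v'_1)+w(v'_2)$.
   Context: A triangulation of a polytope $Q$ with vertex set $V$ is a simplicial complex on (a subset of) $V$ whose faces are affinely independent and whose simplices cover $Q$ and intersect properly in common faces. A lattice polytope has vertices in $\mathbb{Z}^d$; a triangulation is unimodular if every full-dimensional simplex is an affine lattice basis (has minimal possible volume $1/d!$ for full-dimensional $Q$). It is flag if it is the clique complex of its 1-skeleton. The regular triangulation (or subdivision) induced by $w:V\to\mathbb{R}$ is the projection of the lower faces of $\mathrm{conv}\{(v,w(v)):v\in V\}$; equivalently, $\Delta$ is the regular triangulation for $w$ iff for every $x\in Q$ the unique convex combination of vertices of a face of $\Delta$ giving $x$ is the unique convex combination $x=\sum_{v\in V}\lambda_v v$ minimizing $\sum_v\lambda_v w(v)$. *)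

(* Defs.v *)
(* Points of Z^d are 'rV[int]_d; real coordinates are taken in an
   arbitrary real field R (the paper's R is an instance). *)
From HB Require Import structures.
From mathcomp Require Import all_boot all_order all_algebra.
Set Implicit Arguments. Unset Strict Implicit. Unset Printing Implicit Defensive.
Import Order.TTheory GRing.Theory Num.Theory.
Local Open Scope ring_scope.

Section PolytopeDefs.
Variables (R : realFieldType) (d : nat) (T : finType) (pt : T -> 'rV[int]_d).

Definition rpt (v : T) : 'rV[R]_d := map_mx (fun z : int => z%:~R) (pt v).

Definition supported (A : {set T}) (c : T -> R) := forall v, v \notin A -> c v = 0.

Definition lincomb (c : T -> R) : 'rV[R]_d := \sum_v c v *: rpt v.

Definition convex_weights (c : T -> R) := (forall v, 0 <= c v) /\ \sum_v c v = 1.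

Definition in_conv (A : {set T}) (x : 'rV[R]_d) :=
  exists c, [/\ convex_weights c, supported A c & lincomb c = x].

Definition in_aff (A : {set T}) (x : 'rV[R]_d) :=
  exists c, [/\ supported A c, \sum_v c v = 1 & lincomb c = x].

Definition aff_indep (A : {set T}) :=
  forall c, supported A c -> \sum_v c v = 0 -> lincomb c = 0 -> forall v, c v = 0.

Definition is_vertex_set := forall v, ~ in_conv [set~ v] (rpt v).

Definition triangulation (D : {set {set T}}) :=
  [/\ (forall A B : {set T}, A \in D -> B \subset A -> B \in D),
      (forall v, [set v] \in D),
      (forall A, A \in D -> aff_indep A),
      (forall x, in_conv [set: T] x -> exists2 A, A \in D & in_conv A x) &
      (forall (A B : {set T}) x, A \in D -> B \in D -> in_conv A x -> in_conv B x ->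
         in_conv (A :&: B) x)].

(* full-dimensional face: its affine span contains all of V (hence aff Q) *)
Definition fulldim (A : {set T}) := forall v, in_aff A (rpt v).

(* every full-dimensional simplex is an affine lattice basis (of aff Q ∩ Z^d) *)
Definition unimodular (D : {set {set T}}) :=
  forall A, A \in D -> fulldim A ->
  forall z : 'rV[int]_d, in_aff A (map_mx (fun k : int => k%:~R) z) ->
  exists c : T -> int,
    [/\ forall v, v \notin A -> c v = 0, \sum_v c v = 1 & \sum_v c v *: pt v = z].

Definition flag (D : {set {set T}}) :=
  forall A : {set T}, (forall u v, u \in A -> v \in A -> [set u; v] \in D) -> A \in D.

(* D is the regular triangulation induced by w: for each x in Q, the convex
   combination of x supported on a face of D is the unique minimizer of
   sum_v lambda_v w(v) among all convex combinations of x. *)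
Definition regular_for (w : T -> R) (D : {set {set T}}) :=
  forall l m : T -> R, convex_weights l -> convex_weights m ->
    lincomb l = lincomb m -> [set v | l v != 0] \in D ->
    (exists v, m v != l v) ->
    \sum_v l v * w v < \sum_v m v * w v.

End PolytopeDefs.

(* Main.v *)
Require Import Defs.
From HB Require Import structures.
From mathcomp Require Import all_boot all_order all_algebra.
From mathcomp Require Import zify ring lra.
From Stdlib Require Import Classical.
Set Implicit Arguments. Unset Strict Implicit. Unset Printing Implicit Defensive.
Import Order.TTheory GRing.Theory Num.Theory.
Local Open Scope ring_scope.

Section LP.
Variables (R : realFieldType) (I : finType) (K : Type) (a : K -> I -> R) (b : K -> R).
Variables (Z : {set I}) (k0 : K).
Hypothesis ha0 : forall i, a k0 i = 1.
Variable cost : I -> R.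

Definition feas (m : I -> R) := [/\ forall i, 0 <= m i, forall i, i \notin Z -> m i = 0
   & forall k, \sum_i m i * a k i = b k].
Definition kern (z : I -> R) := forall k, \sum_i z i * a k i = 0.
Definition indep (S : {set I}) :=
  forall z, (forall i, i \notin S -> z i = 0) -> kern z -> forall i, z i = 0.
Definition supp (m : I -> R) := [set i | m i != 0].
Definition cst (m : I -> R) := \sum_i m i * cost i.

Lemma reduce m : feas m -> exists m', [/\ feas m', indep (supp m') & cst m' <= cst m].
Proof.
suff H : forall n m, (#|supp m| <= n)%N -> feas m ->
  exists m', [/\ feas m', indep (supp m') & cst m' <= cst m] by exact: H.
elim => [|n IH] {}m Hn Hm; case: (classic (indep (supp m))) => [Hi|Hni];
  try by exists m.
- have : exists z i0, [/\ forall i, i \notin supp m -> z i = 0, kern z & z i0 != 0].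
    apply: NNPP => Hc; apply: Hni => z Hs Hk i; apply: NNPP => Hz; apply: Hc.
    by exists z, i; split => //; apply/eqP.
  case=> z [i0 [Hs _ Hz0]].
  have : i0 \in supp m by apply: contraNT Hz0 => /Hs ->.
  move=> Hi0; move: Hn; rewrite leqn0 cards_eq0 => /eqP Hn.
  by rewrite Hn inE in Hi0.
- have : exists z i0, [/\ forall i, i \notin supp m -> z i = 0, kern z & z i0 != 0].
    apply: NNPP => Hc; apply: Hni => z Hs Hk i; apply: NNPP => Hz; apply: Hc.
    by exists z, i; split => //; apply/eqP.
  case=> z0 [i0 [Hs0 Hk0 Hz00]].
  pose s : R := if cst z0 <= 0 then 1 else -1.
  pose z i := s * z0 i.
  have Hs : forall i, i \notin supp m -> z i = 0 by move=> i Hi; rewrite /z Hs0 // mulr0.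
  have Hk : kern z.
    move=> k; rewrite (eq_bigr (fun i => s * (z0 i * a k i))); last by move=> i _; rewrite /z mulrA.
    by rewrite -mulr_sumr Hk0 mulr0.
  have Hz0 : z i0 != 0 by rewrite /z mulf_neq0 // /s; case: ifP => _; rewrite ?oppr_eq0 oner_eq0.
  have Hcz : cst z <= 0.
    rewrite /cst /z (eq_bigr (fun i => s * (z0 i * cost i))); last by move=> i _; rewrite mulrA.
    rewrite -mulr_sumr -/(cst z0) /s; case: ifP => [H|/negbT H]; first by rewrite mul1r.
    by rewrite mulN1r oppr_le0 ltW // ltNge.
  have Hsum : \sum_i z i = 0.
    by rewrite -[RHS](Hk k0); apply: eq_bigr => i _; rewrite ha0 mulr1.
  have [j1 Hj1] : exists j, z j < 0.
    apply: NNPP => Hc.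
    have Hge : forall i, 0 <= z i by move=> i; rewrite leNgt; apply/negP => H; apply: Hc; exists i.
    have := (@psumr_eq0P _ _ predT z (fun i _ => Hge i) Hsum i0 isT).
    by move/eqP; rewrite (negbTE Hz0).
  case: (@arg_minP _ R _ j1 (fun j => z j < 0) (fun j => m j / - z j) Hj1) => j Hj Hmin.
  case: Hm => Hm0 HmZ Hmb.
  pose t := m j / - z j.
  have Ht : 0 <= t by rewrite /t divr_ge0 // oppr_ge0 ltW.
  pose m' i := m i + t * z i.
  have Hm'j : m' j = 0.
    by rewrite /m' /t invrN mulrN mulNr -mulrA mulVf ?mulr1 ?subrr // lt_eqF.
  have Hm' : feas m'.
    split.
    + move=> i; rewrite /m'; case: (ltP (z i) 0) => Hzi.
      * have := Hmin i Hzi; rewrite /= -/t => Hti.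
        rewrite ler_pdivlMr ?oppr_gt0 // in Hti.
        by rewrite -(opprK (t * z i)) subr_ge0 -mulrN.
      * by rewrite addr_ge0 // mulr_ge0.
    + move=> i Hi; rewrite /m' HmZ // Hs ?mulr0 ?addr0 //.
      by rewrite inE HmZ // eqxx.
    + move=> k; rewrite /m' -(Hmb k).
      rewrite (eq_bigr (fun i => m i * a k i + t * (z i * a k i))); last first.
        by move=> i _; rewrite mulrDl mulrA.
      by rewrite big_split /= -mulr_sumr Hk mulr0 addr0.
  have Hsub : supp m' \proper supp m.
    apply/properP; split.
    + apply/subsetP => i; rewrite !inE; apply: contra => /eqP Hmi.
      by rewrite /m' Hmi Hs ?mulr0 ?addr0 // inE Hmi eqxx.
    + exists j; last by rewrite inE Hm'j eqxx.
      rewrite inE; apply/negP => /eqP Hmj.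
      by move: Hj; rewrite Hs ?ltxx // inE Hmj eqxx.
  have Hn' : (#|supp m'| <= n)%N.
    by rewrite -ltnS; apply: leq_trans Hn; apply: proper_card.
  case: (IH m' Hn' Hm') => m'' [H1 H2 H3]; exists m''; split => //.
  apply: le_trans H3 _.
  rewrite /cst /m' (eq_bigr (fun i => m i * cost i + t * (z i * cost i))); last first.
    by move=> i _; rewrite mulrDl mulrA.
  by rewrite big_split /= -mulr_sumr -/(cst z) gerDl mulr_ge0_le0.
Qed.

Lemma uniq_indep m1 m2 : feas m1 -> feas m2 -> supp m1 = supp m2 ->
  indep (supp m1) -> forall i, m1 i = m2 i.
Proof.
move=> [_ _ H1] [_ _ H2] Hs Hi i; apply/eqP; rewrite -subr_eq0; apply/eqP.
apply: (Hi (fun i => m1 i - m2 i)) => [j Hj|k].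
  have := Hj; rewrite Hs => Hj'; move: Hj Hj'; rewrite !inE !negbK => /eqP -> /eqP ->.
  by rewrite subrr.
rewrite (eq_bigr (fun i => m1 i * a k i - m2 i * a k i)); last by move=> j _; rewrite mulrBl.
by rewrite sumrB H1 H2 subrr.
Qed.

Lemma lp_min : (exists m, feas m) -> exists m0, feas m0 /\ forall m, feas m -> cst m0 <= cst m.
Proof.
move=> [m1 Hm1].
suff H : forall s : seq {set I}, exists m0, feas m0 /\ forall m, feas m ->
    indep (supp m) -> supp m \in s -> cst m0 <= cst m.
  case: (H (enum [set: {set I}])) => m0 [Hm0 Hmin]; exists m0; split => // m Hm.
  case: (reduce Hm) => m' [Hm' Hi Hc]; apply: le_trans Hc.
  by apply: (Hmin m' Hm' Hi); rewrite mem_enum inE.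
elim => [|S s [m0 [Hm0 IH]]]; first by exists m1.
case: (classic (exists m2, [/\ feas m2, indep (supp m2) & supp m2 = S])) => [[m2 [Hm2 Hi2 HS2]]|Hno].
- case: (lerP (cst m2) (cst m0)) => Hc.
  + exists m2; split => // m Hm Him; rewrite inE => /orP [/eqP HS|Hin].
    * have -> : cst m = cst m2.
        by rewrite /cst; apply: eq_bigr => i _; rewrite (@uniq_indep m m2) // HS2.
      exact: lexx.
    * by apply: le_trans Hc _; apply: IH.
  + exists m0; split => // m Hm Him; rewrite inE => /orP [/eqP HS|Hin]; last exact: IH.
    have -> : cst m = cst m2.
      by rewrite /cst; apply: eq_bigr => i _; rewrite (@uniq_indep m m2) // HS2.
    exact: ltW.
- exists m0; split => // m Hm Him; rewrite inE => /orP [/eqP HS|Hin]; last exact: IH.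
  by exfalso; apply: Hno; exists m.
Qed.

End LP.

Section Conv.
Variables (R : realFieldType) (T : finType).

Definition feasC n (g : T -> 'rV[R]_n) y (Z : {set T}) c :=
  [/\ convex_weights c, supported Z c & \sum_v c v *: g v = y].

Lemma sumscale_coord n (g : T -> 'rV[R]_n) (c : T -> R) j :
  (\sum_v c v *: g v) 0 j = \sum_v c v * g v 0 j.
Proof. by rewrite summxE; apply: eq_bigr => v _; rewrite mxE. Qed.

Lemma feasC_feas n (g : T -> 'rV[R]_n) y Z c :
  feasC g y Z c <->
  feas (fun k v => if k is Some j then g v 0 j else 1)
       (fun k => if k is Some j then y 0 j else 1) Z c.
Proof.
split.
- case=> [[H0 H1] HZ Hy]; split => //; case => [j|].
  + by rewrite -Hy sumscale_coord.
  + by rewrite -[RHS]H1; apply: eq_bigr => v _; rewrite mulr1.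
- case=> H0 HZ Hk; split => //.
  + split => //; rewrite -[RHS](Hk None); apply: eq_bigr => v _; by rewrite mulr1.
  + apply/rowP => j; rewrite sumscale_coord -(Hk (Some j)).
    have -> : (0 : 'I_1) = ord0 by apply/val_inj.
    by [].
Qed.

Lemma lpC n (g : T -> 'rV[R]_n) y Z (cost : T -> R) :
  (exists c, feasC g y Z c) ->
  exists c0, feasC g y Z c0 /\
    forall c, feasC g y Z c -> \sum_v c0 v * cost v <= \sum_v c v * cost v.
Proof.
move=> [c Hc].
have := @lp_min R T _ (fun k v => if k is Some j then g v 0 j else 1)
       (fun k => if k is Some j then y 0 j else 1) Z None (fun _ => erefl) cost.
case.
  by exists c; apply/feasC_feas.
move=> c0 [Hc0 Hmin]; exists c0; split; first exact/feasC_feas.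
by move=> c' /feasC_feas; apply: Hmin.
Qed.

End Conv.

Section Geo.
Variables (R : realFieldType) (d : nat) (T : finType) (pt : T -> 'rV[int]_d).

Local Notation rp := (rpt R pt).
Local Notation lc := (@lincomb R d T pt).

Lemma lc_coord (c : T -> R) j : lc c 0 j = \sum_v c v * rp v 0 j.
Proof. exact: sumscale_coord. Qed.

Lemma lc_lin x y (f g : T -> R) :
  lc (fun v => x * f v + y * g v) = x *: lc f + y *: lc g.
Proof.
apply/rowP => j; rewrite !mxE !lc_coord !mulr_sumr -big_split /=.
by apply: eq_bigr => v _; rewrite mulrDl !mulrA.
Qed.

Lemma sum_delta (f : T -> R) a : \sum_v (v == a)%:R * f v = f a.
Proof.
rewrite (bigD1 a) //= eqxx mul1r big1 ?addr0 // => v /negbTE ->.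
by rewrite mul0r.
Qed.

Lemma sum_delta1 (a : T) : \sum_v (v == a)%:R = 1 :> R.
Proof. by rewrite -[RHS](sum_delta (fun _ => 1) a); apply: eq_bigr => v _; rewrite mulr1. Qed.

Lemma lc_delta (a : T) : lc (fun v => (v == a)%:R) = rp a.
Proof.
apply/rowP => j; rewrite lc_coord; exact: (sum_delta (fun v => rp v 0 j)).
Qed.

Lemma aff_eq (A : {set T}) (f g : T -> R) : aff_indep R pt A ->
  supported A f -> supported A g -> \sum_v f v = \sum_v g v -> lc f = lc g ->
  forall v, f v = g v.
Proof.
move=> HA Hf Hg Hs Hl v; apply/eqP; rewrite -subr_eq0; apply/eqP.
apply: (HA (fun v => f v - g v)).
- by move=> u Hu; rewrite Hf // Hg // subrr.
- by rewrite sumrB Hs subrr.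
- apply/rowP => j; rewrite lc_coord mxE.
  rewrite (eq_bigr (fun v => f v * rp v 0 j - g v * rp v 0 j)); last by move=> u _; rewrite mulrBl.
  by rewrite sumrB -!lc_coord Hl subrr.
Qed.

Lemma in_conv_comb (A : {set T}) (x y : 'rV[R]_d) s : in_conv pt A x -> in_conv pt A y ->
  0 <= s <= 1 -> in_conv pt A (s *: x + (1 - s) *: y).
Proof.
move=> [f [[Hf0 Hf1] Hfs Hfx]] [g [[Hg0 Hg1] Hgs Hgy]] /andP [Hs0 Hs1].
exists (fun v => s * f v + (1 - s) * g v); split.
- split; first by move=> v; rewrite addr_ge0 // mulr_ge0 // subr_ge0.
  by rewrite big_split /= -!mulr_sumr Hf1 Hg1 !mulr1 addrC subrK.
- by move=> v Hv; rewrite Hfs // Hgs // !mulr0 addr0.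
- by rewrite lc_lin Hfx Hgy.
Qed.

Variable D : {set {set T}}.
Hypothesis tri : triangulation R pt D.

Lemma supp_self (l : T -> R) : supported [set v | l v != 0] l.
Proof. by move=> v; rewrite inE negbK => /eqP. Qed.

Lemma face_uniq (l m : T -> R) : convex_weights l -> convex_weights m -> lc l = lc m ->
  [set v | l v != 0] \in D -> [set v | m v != 0] \in D -> forall v, l v = m v.
Proof.
move=> Hl Hm Hlm HDl HDm.
case: tri => _ _ Hind _ Hint.
have [c [Hc Hcs Hcx]] : in_conv pt ([set v | l v != 0] :&: [set v | m v != 0]) (lc l).
  apply: Hint => //; first by exists l; split => //; apply: supp_self.
  by exists m; split => //; apply: supp_self.
have E1 := aff_eq (Hind _ HDl) (@supp_self l).
have E2 := aff_eq (Hind _ HDm) (@supp_self m).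
have Hc1 : supported [set v | l v != 0] c.
  by move=> v Hv; apply: Hcs; rewrite inE (negbTE Hv).
have Hc2 : supported [set v | m v != 0] c.
  by move=> v Hv; apply: Hcs; rewrite inE (negbTE Hv) andbF.
case: Hl => _ Hl1; case: Hm => _ Hm1; case: Hc => _ Hc1s.
move=> v; rewrite (E1 c Hc1) ?(E2 c Hc2) //; try congruence.
Qed.

Lemma grow (A : {set T}) : A \in D -> A != set0 -> ~ fulldim R pt A ->
  exists2 C, C \in D & A \proper C.
Proof.
move=> HA HA0 Hnf.
have [v Hv] : exists v, ~ in_aff pt A (rp v).
  apply: NNPP => H; apply: Hnf => v; apply: NNPP => H'; apply: H; by exists v.
case: tri => Hsub Hsing Hind Hcov Hint.
pose N : R := #|A|%:R.
have HN : N != 0 by rewrite pnatr_eq0 -lt0n card_gt0.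
pose beta u := (u \in A)%:R / N.
have Hb0 : forall u, 0 <= beta u by move=> u; rewrite divr_ge0 // ler0n.
have Hb1 : \sum_u beta u = 1.
  rewrite /beta -mulr_suml.
  have -> : \sum_u ((u \in A)%:R : R) = \sum_(u in A) 1.
    by rewrite [RHS]big_mkcond /=; apply: eq_bigr => u _; case: (u \in A).
  by rewrite sumr_const divff.
have Hbs : supported A beta by move=> u /negbTE Hu; rewrite /beta Hu mul0r.
pose p := lc beta. pose r := rp v. pose e := r - p.
have He : e != 0.
  apply/eqP => He; apply: Hv; exists beta; split => //.
  move: He; rewrite /e => /eqP; rewrite subr_eq0 => /eqP H; by rewrite -/p -/r H.
have [j Hj] : exists j, e 0 j != 0.
  apply: NNPP => H; apply: (negP He); apply/eqP/rowP => k; rewrite mxE.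
  apply: NNPP => H'; apply: H; exists k; apply/eqP => H''.
  by apply: H'; move: H''; rewrite /e !mxE.
pose phi (y : 'rV[R]_d) := (y 0 j - p 0 j) / e 0 j.
pose q (t : R) := p + t *: e.
pose g u := rp u - p - phi (rp u) *: e.
have Hsumg : forall c, convex_weights c ->
    \sum_u c u *: g u = lc c - p - (\sum_u c u * phi (rp u)) *: e.
  move=> c [_ Hc1]; apply/rowP => k; rewrite sumscale_coord !mxE lc_coord.
  rewrite (eq_bigr (fun u => c u * rp u 0 k - c u * p 0 k - (c u * phi (rp u)) * e 0 k));
    last by move=> u _; rewrite !mxE; ring.
  by rewrite !sumrB -!mulr_suml Hc1 mul1r /e /r !mxE.
have Hphi : forall c, convex_weights c -> \sum_u c u * phi (rp u) = phi (lc c).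
  move=> c [_ Hc1]; rewrite /phi lc_coord.
  rewrite (eq_bigr (fun u => (c u * rp u 0 j - c u * p 0 j) / e 0 j));
    last by move=> u _; rewrite mulrA mulrBr.
  by rewrite -mulr_suml sumrB -mulr_suml Hc1 mul1r.
have Hphiq : forall t, phi (q t) = t.
  move=> t; rewrite /phi /q !mxE; move: Hj; rewrite /e /r !mxE => Hj'.
  by rewrite addrAC subrr add0r mulfK.
have toF : forall C t c, [/\ convex_weights c, supported C c & lc c = q t] ->
    feasC g 0 C c /\ \sum_u c u * phi (rp u) = t.
  move=> C t c [Hc HcC Hcq]; have Ht : \sum_u c u * phi (rp u) = t by rewrite Hphi // Hcq.
  split => //; split => //.
  by rewrite Hsumg // Ht Hcq /q; apply/rowP => k; rewrite !mxE; ring.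
have fromF : forall C c, feasC g 0 C c -> in_conv pt C (q (\sum_u c u * phi (rp u))).
  move=> C c [Hc HcC Hg]; exists c; split => //.
  apply/eqP; rewrite -subr_eq0 opprD addrA -Hsumg //; exact/eqP.
have Hdelta : forall s : seq {set T}, exists2 del : R, 0 < del & forall C, C \in s ->
    forall t, 0 <= t -> in_conv pt C (q t) -> t < del -> in_conv pt C (q 0).
  elim => [|C s [del1 Hdel1 H1]]; first by exists 1.
  case: (classic (exists t, in_conv pt C (q t))) => [[t1 [c1 Hc1]]|Hno]; last first.
    exists del1 => // C'; rewrite inE => /orP [/eqP -> | /H1 //] t _ Hin.
    by exfalso; apply: Hno; exists t.
  have [c0 [Hc0 Hmin]] := lpC (fun u => phi (rp u)) (ex_intro _ c1 (proj1 (toF _ _ _ Hc1))).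
  pose t0 := \sum_u c0 u * phi (rp u).
  have Ht0 : in_conv pt C (q t0) by apply: fromF.
  have Hmin' : forall t, in_conv pt C (q t) -> t0 <= t.
    move=> t [c Hc]; have [HF <-] := toF _ _ _ Hc; exact: Hmin.
  case: (lerP t0 0) => Ht0s.
  - exists del1 => // C'; rewrite inE => /orP [/eqP -> | /H1 //] t Ht Hin _.
    have := Hmin' _ Hin; rewrite le_eqVlt => /orP [/eqP Htt|Htt].
      have -> : (0 : R) = t0 by apply/eqP; rewrite eq_le Ht0s Htt Ht.
      exact: Ht0.
    have Hne : t - t0 != 0 by rewrite subr_eq0 gt_eqF.
    have Hpos : 0 < t - t0 by rewrite subr_gt0.
    have := in_conv_comb Ht0 Hin (s := t / (t - t0)).
    have -> : t / (t - t0) *: q t0 + (1 - t / (t - t0)) *: q t = q 0.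
      apply/rowP => k; rewrite /q !mxE; field; exact: Hne.
    apply; apply/andP; split; first by rewrite divr_ge0 // ltW.
    rewrite ler_pdivrMr //; lra.
  - exists (Num.min del1 t0); first by rewrite lt_min Hdel1 Ht0s.
    move=> C'; rewrite inE => /orP [/eqP -> | HC'] t Ht Hin; rewrite lt_min => /andP [Hd Ht'].
      by have := Hmin' _ Hin; rewrite leNgt Ht'.
    exact: H1 Hd.
case: (Hdelta (enum [set: {set T}])) => del Hdel Hdels.
pose t := if del <= 1 then del / 2 else 2^-1.
have [Ht0 Htd Ht1] : [/\ 0 < t, t < del & t <= 1].
  rewrite /t; have [H|H] := lerP del 1; rewrite ?H ?(leNgt del) ?H //=; split; lra.
have Hqt : in_conv pt [set: T] (q t).
  exists (fun u => (1 - t) * beta u + t * (u == v)%:R); split.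
  - split; first by move=> u; rewrite addr_ge0 // mulr_ge0 // ?subr_ge0 // ?ler0n // ltW.
    by rewrite big_split /= -!mulr_sumr Hb1 sum_delta1; ring.
  - by move=> u; rewrite inE.
  - rewrite lc_lin lc_delta; apply/rowP => k; rewrite /q /e /r !mxE; ring.
have [C HC HCt] := Hcov _ Hqt.
have HCp : in_conv pt C p.
  have := Hdels C ltac:(by rewrite mem_enum inE) t (ltW Ht0) HCt Htd.
  by rewrite /q scale0r addr0.
have HAp : in_conv pt A p by exists beta.
have [c [[Hc0 Hc1] Hcs Hcp]] := Hint _ _ _ HA HC HAp HCp.
have Ebc := aff_eq (Hind _ HA) Hbs (g := c).
have HAC : A \subset C.
  apply/subsetP => u Hu.
  have Hbu : beta u != 0 by rewrite /beta Hu mul1r invr_eq0.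
  have : c u != 0 by rewrite -(Ebc _ _ _ u) //; [move=> w Hw; apply: Hcs; rewrite inE (negbTE Hw) | rewrite Hb1 Hc1].
  apply: contraR => HuC; apply/eqP; apply: Hcs; by rewrite inE (negbTE HuC) andbF.
exists C => //; rewrite properEneq HAC andbT; apply/eqP => EAC.
move: HCt; rewrite -EAC => [[c' [[Hc'0 Hc'1] Hc's Hc'q]]].
apply: Hv; exists (fun u => t^-1 * c' u + (- (t^-1 - 1)) * beta u); split.
- by move=> u Hu; rewrite Hc's // Hbs // !mulr0 addr0.
- by rewrite big_split /= -!mulr_sumr Hc'1 Hb1; ring.
- rewrite lc_lin Hc'q -/p; apply/rowP => k; rewrite /q /e /r !mxE; field.
  by rewrite gt_eqF.
Qed.

Lemma step (A : {set T}) : A \in D -> ~ fulldim R pt A ->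
  exists2 C, C \in D & A \proper C.
Proof.
move=> HA Hnf; case: (eqVneq A set0) => [HA0|HA0]; last exact: grow.
have [v _] : exists v, ~ in_aff pt A (rp v).
  apply: NNPP => H; apply: Hnf => v; apply: NNPP => H'; apply: H; by exists v.
case: tri => _ Hsing _ _ _.
exists [set v] => //; rewrite HA0 proper0; apply/set0Pn; exists v; exact: set11.
Qed.

Lemma purity (A : {set T}) : A \in D -> exists2 B, B \in D & A \subset B /\ fulldim R pt B.
Proof.
suff H : forall n (A : {set T}), (#|T| - #|A| <= n)%N -> A \in D ->
    exists2 B, B \in D & A \subset B /\ fulldim R pt B by exact: H.
elim => [|n IH] {}A Hn HA; case: (classic (fulldim R pt A)) => Hf;
  try by exists A.
- have [C HC HAC] := step HA Hf.
  have := proper_card HAC; have := max_card C; lia.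
- have [C HC HAC] := step HA Hf.
  have [B HB [HCB HBf]] : exists2 B, B \in D & C \subset B /\ fulldim R pt B.
    apply: IH HC; have := proper_card HAC; have := max_card C; lia.
  by exists B => //; split => //; apply: subset_trans HCB; apply: proper_sub.
Qed.

End Geo.


Lemma sum_deltaG (S : pzRingType) (V : lmodType S) (T : finType) (f : T -> V) a :
  \sum_v ((v == a)%:R : S) *: f v = f a.
Proof.
rewrite (bigD1 a) //= eqxx scale1r big1 ?addr0 // => v /negbTE ->.
by rewrite scale0r.
Qed.

Lemma sum_deltaR (S : pzRingType) (T : finType) (a : T) :
  \sum_v ((v == a)%:R : S) = 1.
Proof.
rewrite (bigD1 a) //= eqxx big1 ?addr0 // => v /negbTE ->. by [].
Qed.

Lemma pick1 (T : finType) (f : T -> int) : (forall v, 0 <= f v) -> \sum_v f v = 1 ->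
  exists a, forall v, f v = (v == a)%:R.
Proof.
move=> H0 H1.
have [a Ha] : exists a, f a != 0.
  apply: NNPP => H; move: H1; rewrite big1 // => v _; apply: NNPP => H'.
  by apply: H; exists v; apply/eqP.
exists a.
move: H1; rewrite (bigD1 a) //= => H1.
have Hs : 0 <= \sum_(v | v != a) f v by apply: sumr_ge0 => v _.
have Ha0 := H0 a.
move: Hs H1; set s := \sum_(v | v != a) f v => Hs H1.
have Hfa : f a = 1 by lia.
have Hs0 : s = 0 by lia.
move=> v; case: (eqVneq v a) => [->|Hva]; first by rewrite Hfa.
by rewrite (psumr_eq0P (fun i _ => H0 i) Hs0).
Qed.

Lemma pick2 (T : finType) (f : T -> int) : (forall v, 0 <= f v) -> \sum_v f v = 2 ->
  exists a b, forall v, f v = (v == a)%:R + (v == b)%:R.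
Proof.
move=> H0 H2.
have [a Ha] : exists a, f a != 0.
  apply: NNPP => H; move: H2; rewrite big1 // => v _; apply: NNPP => H'.
  by apply: H; exists v; apply/eqP.
have [b Hb] : exists b, forall v, f v - (v == a)%:R = (v == b)%:R.
  apply: pick1.
  - move=> v; case: (eqVneq v a) => [->|_] /=; last by rewrite subr0.
    have := H0 a; lia.
  - by rewrite sumrB H2 sum_deltaR.
by exists a, b => v; rewrite -Hb addrC subrK.
Qed.

Section Main.
Variables (R : realFieldType) (d : nat) (T : finType) (pt : T -> 'rV[int]_d).
Variables (D : {set {set T}}) (w : T -> R).
Hypotheses (inj : injective pt) (vset : is_vertex_set R pt) (tri : triangulation R pt D)
  (uni : unimodular R pt D) (flg : flag D).

Local Notation rp := (rpt R pt).
Local Notation lc := (@lincomb R d T pt).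

Lemma rp_eq a b c e : pt a + pt b = pt c + pt e -> rp a + rp b = rp c + rp e.
Proof.
move=> H; apply/rowP => k; have := congr1 (fun M : 'M[int]_(1,d) => M 0 k) H; rewrite !mxE => H'.
by rewrite -!intrD H'.
Qed.

Lemma int_lc (c : T -> int) z : \sum_v c v *: pt v = z ->
  lc (fun v => (c v)%:~R) = map_mx (fun k : int => k%:~R) z.
Proof.
move=> <-; apply/rowP => k; rewrite lc_coord !mxE summxE rmorph_sum.
by apply: eq_bigr => v _; rewrite !mxE /= intrM.
Qed.

Lemma lc_scale x (f : T -> R) : lc (fun v => x * f v) = x *: lc f.
Proof.
apply/rowP => k; rewrite mxE !lc_coord mulr_sumr.
by apply: eq_bigr => v _; rewrite mulrA.
Qed.

Lemma edge_exists u1 u2 : u1 != u2 -> [set u1; u2] \notin D ->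
  exists v1 v2, [/\ v1 != v2, [set v1; v2] \in D & pt v1 + pt v2 = pt u1 + pt u2].
Proof.
move=> Hu HnD.
have Htri := tri; case: Htri => Hsub Hsing Hind Hcov Hint.
pose mu v : R := 2^-1 * (v == u1)%:R + 2^-1 * (v == u2)%:R.
have Hmu : convex_weights mu.
  split; first by move=> v; rewrite addr_ge0 // mulr_ge0 // ?invr_ge0 ?ler0n.
  by rewrite big_split /= -!mulr_sumr !sum_delta1; field.
have Hmuy : lc mu = 2^-1 *: rp u1 + 2^-1 *: rp u2 by rewrite lc_lin !lc_delta.
have [A HA [lam [Hlam HlamA Hlamy]]] : exists2 A, A \in D & in_conv pt A (lc mu).
  by apply: Hcov; exists mu; split => // v; rewrite inE.
have [B HB [HAB HBf]] := purity tri HA.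
have [k1 [Hk1s Hk1S Hk1p]] := uni HB HBf (HBf u1).
have [k2 [Hk2s Hk2S Hk2p]] := uni HB HBf (HBf u2).
pose kap v := k1 v + k2 v.
have Hks : \sum_v kap v *: pt v = pt u1 + pt u2.
  by rewrite -Hk1p -Hk2p -big_split /=; apply: eq_bigr => v _; rewrite scalerDl.
have Hk : forall v, (kap v)%:~R = 2 * lam v.
  apply: (aff_eq (Hind _ HB)).
  - by move=> v Hv; rewrite /kap Hk1s // Hk2s.
  - move=> v Hv; case: Hlam => _ _; rewrite HlamA ?mulr0 //.
    by apply: contra Hv; apply: (subsetP HAB).
  - case: Hlam => _ Hl1; rewrite -mulr_sumr Hl1 mulr1 -rmorph_sum.
    by rewrite /kap big_split /= Hk1S Hk2S.
  - by rewrite lc_scale Hlamy (int_lc Hks) Hmuy; apply/rowP => k; rewrite !mxE intrD; field.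
have Hk0 : forall v, 0 <= kap v.
  move=> v; rewrite -(ler0z R) Hk mulr_ge0 //; by case: Hlam.
have HkA : forall v, kap v != 0 -> v \in A.
  move=> v; apply: contraR => Hv; rewrite -(intr_eq0 R) Hk HlamA ?mulr0 //.
have [v1 [v2 Hv12]] : exists a b, forall v, kap v = (v == a)%:R + (v == b)%:R.
  apply: pick2 => //; by rewrite /kap big_split /= Hk1S Hk2S.
have Hv1A : v1 \in A by apply: HkA; rewrite Hv12 eqxx; case: (v1 == v2).
have Hv2A : v2 \in A by apply: HkA; rewrite Hv12 eqxx; case: (v2 == v1).
have Heq : pt v1 + pt v2 = pt u1 + pt u2.
  rewrite -Hks (eq_bigr (fun v => ((v == v1)%:R : int) *: pt v + ((v == v2)%:R : int) *: pt v)).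
    by rewrite big_split /= !sum_deltaG.
  by move=> v _; rewrite Hv12 scalerDl.
exists v1, v2; split => //; last first.
  by apply: (Hsub _ _ HA); rewrite subUset !sub1set Hv1A Hv2A.
apply/eqP => E; rewrite -E in Heq.
have Hu1 : u1 != v1.
  apply/eqP => E1; rewrite E1 in Heq; move/addrI/inj: Heq => E2.
  by move: Hu; rewrite E1 E2 eqxx.
have Hu2 : u2 != v1.
  apply/eqP => E1; rewrite E1 in Heq; move/addIr/inj: Heq => E2.
  by move: Hu; rewrite E1 E2 eqxx.
apply: (vset (v:=v1)); exists mu; split => //.
- move=> v; rewrite !inE negbK => /eqP ->; rewrite /mu eq_sym (negbTE Hu1) eq_sym (negbTE Hu2).
  by rewrite !mulr0 addr0.
- rewrite Hmuy; have := rp_eq Heq => H; apply/rowP => k.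
  have := congr1 (fun M : 'M[R]_(1,d) => M 0 k) H; rewrite !mxE => H'; lra.
Qed.

Hypothesis Hii : forall v1 v2 u1 u2 : T,
      v1 != v2 -> [set v1; v2] \in D ->
      [set u1; u2] != [set v1; v2] ->
      pt v1 + pt v2 = pt u1 + pt u2 ->
      w v1 + w v2 < w u1 + w u2.

Lemma move_down (m : T -> R) : convex_weights m -> [set v | m v != 0] \notin D ->
  exists m', [/\ convex_weights m', lc m' = lc m & \sum_v m' v * w v < \sum_v m v * w v].
Proof.
move=> [Hm0 Hm1] HnD.
pose S := [set v | m v != 0].
have [u1 [u2 [Hu1 Hu2 HuD]]] : exists u1 u2, [/\ u1 \in S, u2 \in S & [set u1; u2] \notin D].
  case: (boolP [forall u, forall v, (u \in S) ==> (v \in S) ==> ([set u; v] \in D)]) => H.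
    exfalso; move/negP: HnD; apply; apply: flg => u v Hu Hv.
    by move/forallP: H => /(_ u) /forallP /(_ v); rewrite Hu Hv.
  move/forallPn: H => [u1 /forallPn [u2]]; rewrite !negb_imply => /andP [Hu1 /andP [Hu2 HnD']].
  by exists u1, u2.
have Hne : u1 != u2.
  apply/eqP => E; move: HuD; rewrite E setUid.
  by case: tri => _ Hsing _ _ _; rewrite Hsing.
have [v1 [v2 [Hv Hvd Heq]]] := edge_exists Hne HuD.
have Hset : [set u1; u2] != [set v1; v2] by apply: contraNneq HuD => ->.
have Hw := Hii Hv Hvd Hset Heq.
have Hmu1 : 0 < m u1 by rewrite lt0r; rewrite inE in Hu1; rewrite Hu1 Hm0.
have Hmu2 : 0 < m u2 by rewrite lt0r; rewrite inE in Hu2; rewrite Hu2 Hm0.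
pose t := Num.min (m u1) (m u2).
have Ht : 0 < t by rewrite lt_min Hmu1 Hmu2.
have Ht1 : t <= m u1 by rewrite ge_min lexx.
have Ht2 : t <= m u2 by rewrite ge_min lexx orbT.
pose dl (a v : T) : R := (v == a)%:R.
pose m' v := m v + t * (dl v1 v + dl v2 v - dl u1 v - dl u2 v).
have Hdl : forall a v, 0 <= dl a v by move=> a v; rewrite /dl ler0n.
have Hsum : forall (f : T -> R), \sum_v m' v * f v =
    \sum_v m v * f v + t * ((f v1 + f v2) - (f u1 + f u2)).
  move=> f.
  rewrite (eq_bigr (fun v => m v * f v + t * (dl v1 v * f v) + t * (dl v2 v * f v)
     - t * (dl u1 v * f v) - t * (dl u2 v * f v))); last by move=> v _; rewrite /m'; ring.
  rewrite !sumrB !big_split /= -!mulr_sumr /dl !sum_delta; ring.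
exists m'; split.
- split.
  + move=> v; rewrite /m'.
    have := Hdl v1 v; have := Hdl v2 v; have := Hm0 v.
    case: (eqVneq v u1) => [->|Hvu1].
      rewrite /dl eqxx (negbTE Hne) => H0 H1 H2.
      move: H1 H2; set a := (_ == v2)%:R; set b := (_ == v1)%:R => H1 H2.
      rewrite /= ?mulr1n ?mulr0n; nra.
    case: (eqVneq v u2) => [->|Hvu2].
      rewrite /dl eqxx (eq_sym u2 u1) (negbTE Hne) => H0 H1 H2.
      move: H1 H2; set a := (_ == v2)%:R; set b := (_ == v1)%:R => H1 H2.
      rewrite /= ?mulr1n ?mulr0n; nra.
    move=> H0 H1 H2; rewrite /dl in H1 H2 *; rewrite (negbTE Hvu1) (negbTE Hvu2) /= ?mulr0n ?subr0.
    move: H1 H2; set a := (v == v1)%:R; set b := (v == v2)%:R => H1 H2; nra.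
  + have := Hsum (fun _ => 1); rewrite !(eq_bigr _ (fun v _ => mulr1 _)) => ->.
    by rewrite Hm1 subrr mulr0 addr0.
- apply/rowP => k; rewrite !lc_coord Hsum.
  have := congr1 (fun M : 'M[int]_(1,d) => M 0 k) Heq; rewrite !mxE => H'.
  by rewrite -!intrD H' subrr mulr0 addr0.
- rewrite Hsum gtrDl pmulr_rlt0 // subr_lt0 //.
Qed.

End Main.

Lemma half_convex (R : realFieldType) (T : finType) (a b : T) :
  convex_weights (fun v => 2^-1 * (v == a)%:R + 2^-1 * (v == b)%:R : R).
Proof.
split; first by move=> v; rewrite addr_ge0 // mulr_ge0 // ?invr_ge0 ?ler0n.
by rewrite big_split /= -!mulr_sumr !sum_delta1; field.
Qed.

Lemma half_supp (R : realFieldType) (T : finType) (a b : T) :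
  [set v | (2^-1 * (v == a)%:R + 2^-1 * (v == b)%:R : R) != 0] = [set a; b].
Proof.
apply/setP => v; rewrite !inE.
case: (v == a); case: (v == b) => /=; rewrite ?mulr1n ?mulr0n ?mulr0 ?mulr1 ?addr0 ?add0r ?eqxx //;
  apply/negP => /eqP H; have : (0 : R) < 2^-1 by rewrite invr_gt0 ltr0n.
- lra.
- lra.
- lra.
Qed.

Lemma half_cost (R : realFieldType) (T : finType) (a b : T) (w : T -> R) :
  \sum_v (2^-1 * (v == a)%:R + 2^-1 * (v == b)%:R) * w v = 2^-1 * w a + 2^-1 * w b.
Proof.
rewrite (eq_bigr (fun v => 2^-1 * ((v == a)%:R * w v) + 2^-1 * ((v == b)%:R * w v)));
  last by move=> v _; rewrite mulrDl !mulrA.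
by rewrite big_split /= -!mulr_sumr !sum_delta.
Qed.

Unset Implicit Arguments.

Theorem lemma3p3 (R : realFieldType) (d : nat) (T : finType)
    (pt : T -> 'rV[int]_d) (D : {set {set T}}) (w : T -> R) :
  injective pt ->
  is_vertex_set R pt ->
  triangulation R pt D ->
  unimodular R pt D ->
  flag D ->
  (regular_for pt w D <->
   (forall v1 v2 u1 u2 : T,
      v1 != v2 -> [set v1; v2] \in D ->
      [set u1; u2] != [set v1; v2] ->
      pt v1 + pt v2 = pt u1 + pt u2 ->
      w v1 + w v2 < w u1 + w u2)).
Proof.
move=> inj vset tri uni flg; split.
- move=> Hreg v1 v2 u1 u2 Hne HD Hneq Heq.
  pose l v : R := 2^-1 * (v == v1)%:R + 2^-1 * (v == v2)%:R.
  pose m v : R := 2^-1 * (v == u1)%:R + 2^-1 * (v == u2)%:R.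
  have Hlc : lincomb pt l = lincomb pt m.
    rewrite !lc_lin !lc_delta; have H := rp_eq R Heq; apply/rowP => k.
    have := congr1 (fun M : 'M[R]_(1,d) => M 0 k) H; rewrite !mxE => H'; lra.
  have HlD : [set v | l v != 0] \in D by rewrite half_supp.
  have Hex : exists v, m v != l v.
    apply: NNPP => H; apply/negP: Hneq; apply/negPn/eqP.
    rewrite -(half_supp R u1 u2) -(half_supp R v1 v2); apply/setP => v; rewrite !inE.
    change ((m v != 0) = (l v != 0)); have -> // : m v = l v by apply: NNPP => H'; apply: H; exists v; apply/eqP.
  have := Hreg l m (half_convex R v1 v2) (half_convex R u1 u2) Hlc HlD Hex.
  rewrite !half_cost; lra.
- move=> Hii l m Hl Hm Hlm HlD [v0 Hv0].
  have [c0 [Hc0 Hmin]] : exists c0, feasC (rpt R pt) (lincomb pt l) setT c0 /\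
      forall c, feasC (rpt R pt) (lincomb pt l) setT c ->
        \sum_v c0 v * w v <= \sum_v c v * w v.
    apply: lpC; exists l; split => // v; by rewrite inE.
  case: (Hc0) => Hc0c _ Hc0l.
  have Hc0D : [set v | c0 v != 0] \in D.
    apply/negPn/negP => HnD.
    have [m' [Hm' Hm'l Hm'c]] := move_down inj vset tri uni flg Hii Hc0c HnD.
    have Hf : feasC (rpt R pt) (lincomb pt l) setT m'.
      split => //; first by move=> v; rewrite inE.
      by rewrite -Hc0l.
    by have := Hmin m' Hf; rewrite leNgt Hm'c.
  have Ec0 := face_uniq tri Hc0c Hl Hc0l Hc0D HlD.
  have Hlmin : forall c, convex_weights c -> lincomb pt c = lincomb pt l ->
      \sum_v l v * w v <= \sum_v c v * w v.
    move=> c Hc Hcl; have := Hmin c; rewrite (eq_bigr (fun v => l v * w v)).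
      by apply; split => // v; rewrite inE.
    by move=> v _; rewrite Ec0.
  case: (boolP ([set v | m v != 0] \in D)) => HmD.
    by have := face_uniq tri Hm Hl (esym Hlm) HmD HlD v0; move/eqP: Hv0.
  have [m' [Hm' Hm'l Hm'c]] := move_down inj vset tri uni flg Hii Hm HmD.
  apply: le_lt_trans Hm'c; apply: Hlmin => //; by rewrite Hm'l.
Qed.
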